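(* Let $\beta\ge 1$ and let $R=(S^0,\dots,S^T)$ be a $\beta$-bounded $T$-covering in a congestion game in which every delay function is $f(x)=x$. Then $C(S^T)\le 2\rho(R)$.
   Context: A congestion game has players $N=\{1,\dots,n\}$, a finite resource set $E$ and strategy sets $\Sigma_i\subseteq 2^E$. For a profile $S=(s_1,\dots,s_n)$, $n_e(S)=|\{i: e\in s_i\}|$. Here all delays are $f(x)=x$, so the cost of player $i$ is $c_i(S)=\sum_{e\in s_i}n_e(S)$ and the social cost is $C(S)=\sum_i c_i(S)=\sum_{e\in E}n_e(S)^2$. Fix an optimal profile $S^*=(s_1^*,\dots,s_n^* )$ minimizing $C$ and write $\mathrm{OPT}=C(S^* )$. A best response of player $i$ in $S$ is a strategy $s_i^b\in\Sigma_i$ minimizing $c_i(S_{-i},\cdot)$ over $\Sigma_i$ (where $(S_{-i},s_i')$ replaces $s_i$ by $s_i'$); if no strategy strictly decreases $i$'s cost, the best response is $s_i$ itself. A $T$-covering is a sequence of profiles $R=(S^0,\dots,S^T)$ together with players $\pi(1),\dots,\pi(T)$ such that for each $1\le t\le T$, $S^t=(S^{t-1}_{-\pi(t)},s')$ where $s'$ is a best response of $\pi(t)$ in $S^{t-1}$, and every player of $N$ occurs at least once among $\pi(1),\dots,\pi(T)$. It is $\beta$-bounded if every player occurs at most $\beta$ times among $\pi(1),\dots,\pi(T)$. For each player $i$, $\mathrm{last}(i)=\max\{t:\pi(t)=i\}$. Define $\rho(R)=\sum_{i=1}^n\sum_{e\in s_i^*}\bigl(n_e(S^{\mathrm{last}(i)-1})+1\bigr)$.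 *)

(* Defs.v *)
From mathcomp Require Import all_boot.
Set Implicit Arguments. Unset Strict Implicit. Unset Printing Implicit Defensive.

Section Congestion.
Variables (n : nat) (E : finType).

Definition profile := 'I_n -> {set E}.

Definition load (S : profile) (e : E) : nat := #|[set i | e \in S i]|.

Definition pcost (S : profile) (i : 'I_n) : nat := \sum_(e in S i) load S e.

Definition scost (S : profile) : nat := \sum_(i < n) pcost S i.

Definition upd (S : profile) (i : 'I_n) (s' : {set E}) : profile :=
  fun j => if j == i then s' else S j.

Definition valid (Sigma : 'I_n -> {set {set E}}) (S : profile) : Prop :=
  forall i, S i \in Sigma i.

Definition optimal (Sigma : 'I_n -> {set {set E}}) (Sstar : profile) : Prop :=
  valid Sigma Sstar /\ forall S, valid Sigma S -> scost Sstar <= scost S.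

Definition best_response (Sigma : 'I_n -> {set {set E}}) (S : profile)
    (i : 'I_n) (s' : {set E}) : Prop :=
  [/\ s' \in Sigma i,
      (forall s'', s'' \in Sigma i -> pcost (upd S i s') i <= pcost (upd S i s'') i)
    & ((forall s'', s'' \in Sigma i -> pcost S i <= pcost (upd S i s'') i) -> s' = S i)].

(* R = (S^0,...,S^T) with players pi(1),...,pi(T) is a T-covering.
   Only S 0 .. S T and pi 1 .. pi T are relevant. *)
Definition covering (Sigma : 'I_n -> {set {set E}}) (T : nat)
    (S : nat -> profile) (pi : nat -> 'I_n) : Prop :=
  [/\ valid Sigma (S 0),
      (forall t, 1 <= t <= T ->
         exists2 s', best_response Sigma (S t.-1) (pi t) s' &
                     S t = upd (S t.-1) (pi t) s')
    & (forall i : 'I_n, exists2 t, 1 <= t <= T & pi t = i)].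

Definition occ (T : nat) (pi : nat -> 'I_n) (i : 'I_n) : nat :=
  #|[set t : 'I_T.+1 | (1 <= (t : nat)) && (pi t == i)]|.

Definition bounded (beta T : nat) (pi : nat -> 'I_n) : Prop :=
  forall i, occ T pi i <= beta.

Definition last_move (T : nat) (pi : nat -> 'I_n) (i : 'I_n) : nat :=
  \max_(1 <= t < T.+1 | pi t == i) t.

Definition rho (Sstar : profile) (T : nat) (S : nat -> profile)
    (pi : nat -> 'I_n) : nat :=
  \sum_(i < n) \sum_(e in Sstar i) (load (S (last_move T pi i).-1) e + 1).

End Congestion.

(* Main.v *)
Require Import Defs.
From mathcomp Require Import all_boot.
From mathcomp Require Import zify.
Set Implicit Arguments. Unset Strict Implicit. Unset Printing Implicit Defensive.

Section Aux.
Variables (n : nat) (E : finType).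

Lemma loadE (S : profile n E) e : load S e = \sum_(j < n) (e \in S j).
Proof.
rewrite /load -sum1_card big_mkcond /=; apply: eq_bigr => j _.
by rewrite inE; case: (e \in S j).
Qed.

Lemma load_upd (S : profile n E) i s e : load (upd S i s) e <= load S e + 1.
Proof.
rewrite !loadE (bigD1 i) //= [X in _ <= X + _](bigD1 i) //= /upd eqxx.
have -> : \sum_(j < n | j != i) (e \in (if j == i then s else S j)) =
          \sum_(j < n | j != i) (e \in S j).
  by apply: eq_bigr => j /negbTE ->.
set X := \sum_(j < n | j != i) _; case: (e \in s); case: (e \in S i); rewrite /=; lia.
Qed.

Lemma upd_self (S : profile n E) i s : upd S i s i = s.
Proof. by rewrite /upd eqxx. Qed.

End Aux.

Theorem lemma1 (n : nat) (E : finType) (Sigma : 'I_n -> {set {set E}})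
    (Sstar : profile n E) (beta T : nat) (S : nat -> profile n E)
    (pi : nat -> 'I_n) :
  optimal Sigma Sstar ->
  1 <= beta ->
  covering Sigma T S pi ->
  bounded beta T pi ->
  scost (S T) <= 2 * rho Sstar T S pi.
Proof.
move=> [vstar _] _ [_ Hstep Hcov] _.
set L := last_move T pi.
have Lge : forall i t, 1 <= t <= T -> pi t = i -> t <= L i.
  move=> i t /andP[t1 tT] pit; rewrite /L /last_move.
  apply: (@leq_bigmax_seq _ _ (fun t => pi t == i) id t).
    by rewrite mem_index_iota; lia.
  by rewrite pit.
have Lprop : forall i, [/\ 1 <= L i, L i <= T & pi (L i) = i].
  move=> i; have [t Ht pit] := Hcov i.
  have : (L i == 0) || ((1 <= L i <= T) && (pi (L i) == i)).
    rewrite /L /last_move big_nat_cond.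
    apply: (big_ind (fun x => (x == 0) || ((1 <= x <= T) && (pi x == i)))).
    - by rewrite eqxx.
    - move=> x y Hx Hy; rewrite /maxn; by case: ifP.
    - move=> k /andP[/andP [k1 kT] ->]; apply/orP; right; rewrite andbT; lia.
  have := Lge i t Ht pit.
  move=> H1; case/orP=> [/eqP H0 | /andP[/andP[a b] /eqP c]].
    by move: Ht H1; rewrite H0; lia.
  exact: And3 a b c.
have stay : forall j k, L j + k <= T -> S (L j + k) j = S (L j) j.
  move=> j; elim=> [|k IH] Hk; first by rewrite addn0.
  have [s' _ Heq] := Hstep (L j + k.+1) ltac:(lia).
  rewrite Heq /upd.
  have -> : (j == pi (L j + k.+1)) = false.
    apply/negbTE/eqP => Hj.
    have := Lge j (L j + k.+1) ltac:(lia) (esym Hj); lia.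
  rewrite addnS /=; apply: IH; lia.
set F := S T.
have FL : forall i j, L j <= L i -> F j = S (L i) j.
  move=> i j Hji; have [_ LiT _] := Lprop i; have [_ LjT _] := Lprop j.
  have h1 := stay j (L i - L j) ltac:(lia).
  have h2 := stay j (T - L j) ltac:(lia).
  rewrite subnKC // in h1; rewrite subnKC // in h2.
  by rewrite /F h2 h1.
pose g i j := \sum_(e : E) ((e \in F i) && (e \in F j) : nat).
have gC : forall i j, g i j = g j i.
  by move=> i j; apply: eq_bigr => e _; rewrite andbC.
have step1 : scost F = \sum_(i < n) \sum_(j < n) g i j.
  rewrite /scost; apply: eq_bigr => i _.
  rewrite /pcost big_mkcond /= /g exchange_big /=; apply: eq_bigr => e _.
  rewrite loadE; case: (e \in F i) => /=; first by [].
  by rewrite big1.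
have step2 : \sum_(i < n) \sum_(j < n) g i j =
   \sum_(i < n) \sum_(j < n | L j <= L i) g i j +
   \sum_(i < n) \sum_(j < n | ~~ (L j <= L i)) g i j.
  rewrite -big_split /=; apply: eq_bigr => i _.
  by rewrite (bigID (fun j => L j <= L i)).
have step3 : \sum_(i < n) \sum_(j < n | ~~ (L j <= L i)) g i j <=
             \sum_(i < n) \sum_(j < n | L j <= L i) g i j.
  under eq_bigr => i _ do rewrite big_mkcond.
  rewrite exchange_big /=; apply: leq_sum => i _.
  rewrite [X in _ <= X]big_mkcond; apply: leq_sum => j _ /=.
  case H1: (L i <= L j); first exact: leq0n.
  have H2 : L j <= L i by apply: ltnW; rewrite ltnNge H1.
  rewrite [X in _ <= X]ifT; last exact: H2.
  by rewrite (gC j i); apply: leqnn.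
have step4 : forall i, \sum_(j < n | L j <= L i) g i j <=
      \sum_(e in Sstar i) (load (S (L i).-1) e + 1).
  move=> i; have [L1 LT Lpi] := Lprop i.
  have [s' [_ Hbr _] Heq] := Hstep (L i) ltac:(lia).
  apply: (@leq_trans (pcost (S (L i)) i)).
    rewrite /g exchange_big /= /pcost [X in _ <= X]big_mkcond /=.
    apply: leq_sum => e _.
    rewrite -(FL i i (leqnn _)); case: (e \in F i) => /=; last by rewrite big1.
    rewrite loadE [X in _ <= X](bigID (fun j => L j <= L i)) /=.
    apply: leq_trans (leq_addr _ _).
    by apply: eq_leq; apply: eq_bigr => j Hj; rewrite (FL i j Hj).
  rewrite Heq; rewrite Lpi in Hbr *.
  apply: leq_trans (Hbr (Sstar i) (vstar i)) _.
  rewrite /pcost upd_self; apply: leq_sum => e _; exact: load_upd.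
rewrite step1 step2.
apply: (@leq_trans (2 * \sum_(i < n) \sum_(j < n | L j <= L i) g i j)).
  by move: step3; lia.
rewrite leq_mul2l /rho; apply/orP; right.
by apply: leq_sum => i _; exact: step4.
Qed.
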